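(* Let $0<q<1$. Then \[ \sum_{n=0}^{\infty}\frac{(1-q^{4n+3})(1-q^{2n+1})(1/2|q^{2})_{n}^{2}(1/3|q^{2})_{n}(2/3|q^{2})_{n}}{(1-q^{2})(1-q^{2n+2})([n]_{q^{2}}!)^{2}(7/6|q^{2})_{n+1}(5/6|q^{2})_{n+1}}\,q^{2n} =\frac{[1/6]_{q^{2}}\,(q^{4/3},q^{2/3};q^{2})_{\infty}\,q^{1/4}}{[1/3]_{q^{2}}[2/3]_{q^{2}}[1/2]_{q^{2}}\,(q^{1/3},q^{5/3};q^{2})_{\infty}\,\pi_{q}}. \]
   Context: Let $0<q<1$ and write $q^{x}=e^{x\log q}$. $(z;q)_\infty=\prod_{k\ge0}(1-zq^k)$, $(z_1,z_2;q)_\infty=(z_1;q)_\infty(z_2;q)_\infty$. $[z]_{q^2}=\frac{1-q^{2z}}{1-q^2}$; for integers $n\ge0$, $(x|q^2)_n=\prod_{k=0}^{n-1}[x+k]_{q^2}$ (empty product $=1$); $[0]_{q^2}!=1$, $[n]_{q^2}!=\prod_{k=1}^n[k]_{q^2}$. $\pi_q=(1-q^2)q^{1/4}\frac{(q^2;q^2)_\infty^2}{(q;q^2)_\infty^2}$. *)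

(* Defs.v *)
From Stdlib Require Import Reals Lra Classical ClassicalEpsilon.
Open Scope R_scope.

Definition qpow (q x : R) : R := Rpower q x.

Fixpoint prodR (f : nat -> R) (n : nat) : R :=
  match n with O => 1 | S m => prodR f m * f m end.

(* the limit of a sequence if it converges, 0 otherwise *)
Definition seq_lim (u : nat -> R) : R :=
  match excluded_middle_informative (exists l, Un_cv u l) with
  | left H => proj1_sig (constructive_indefinite_description _ H)
  | right _ => 0
  end.

Definition qpoch_inf (z p : R) : R :=
  seq_lim (fun N => prodR (fun k => 1 - z * p ^ k) N).

(* [z]_{q^2} = (1 - q^{2z}) / (1 - q^2) *)
Definition qbr (q z : R) : R := (1 - qpow q (2 * z)) / (1 - q ^ 2).

(* (x|q^2)_n = prod_{k=0}^{n-1} [x+k]_{q^2} *)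
Definition qshift (q x : R) (n : nat) : R :=
  prodR (fun k => qbr q (x + INR k)) n.

Definition qfact (q : R) (n : nat) : R :=
  prodR (fun k => qbr q (INR (S k))) n.

Definition pi_q (q : R) : R :=
  (1 - q ^ 2) * qpow q (1/4) * (qpoch_inf (q^2) (q^2)) ^ 2
    / (qpoch_inf q (q^2)) ^ 2.

(* Main.v *)
Require Import Defs.
From Stdlib Require Import Reals Lra Lia ClassicalEpsilon.
From Coquelicot Require Import Coquelicot.
Open Scope R_scope.

Lemma seq_lim_eq u l : Un_cv u l -> seq_lim u = l.
Proof.
  intros H. unfold seq_lim. destruct excluded_middle_informative as [e|n].
  - destruct (constructive_indefinite_description _ e) as [l' Hl']; simpl.
    eapply UL_sequence; eauto.
  - exfalso; apply n; eauto.
Qed.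

Definition PP (p z : R) (n : nat) := prodR (fun k => 1 - z * p ^ k) n.

Lemma pow_le1 x n : 0 <= x <= 1 -> x ^ n <= 1.
Proof. intros H; induction n; simpl; nra. Qed.

Lemma pow_ge0 x n : 0 <= x -> 0 <= x ^ n.
Proof. intros H; induction n; simpl; nra. Qed.

Lemma PP_S p z n : PP p z (S n) = PP p z n * (1 - z * p ^ n).
Proof. reflexivity. Qed.

Lemma fac_pos p z n : 0 < p < 1 -> 0 <= z < 1 -> 0 < 1 - z * p ^ n.
Proof. intros Hp Hz. assert (h : p ^ n <= 1) by (apply pow_le1; lra). assert (h2 : 0 <= p ^ n) by (apply pow_ge0; lra). nra. Qed.

Lemma PP_pos p z n : 0 < p < 1 -> 0 <= z < 1 -> 0 < PP p z n.
Proof.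
  intros Hp Hz; induction n.
  - unfold PP; simpl; lra.
  - rewrite PP_S. assert (h := fac_pos p z n Hp Hz). nra.
Qed.

Lemma prodR_add f M N : prodR f (M + N) = prodR f M * prodR (fun k => f (M + k)%nat) N.
Proof.
  induction N; simpl.
  - rewrite Nat.add_0_r; ring.
  - rewrite Nat.add_succ_r; simpl; rewrite IHN; ring.
Qed.

Fixpoint sumR (f : nat -> R) (n : nat) : R :=
  match n with O => 0 | S m => sumR f m + f m end.

Lemma prodR_nonneg a N : (forall k, 0 <= a k <= 1) -> 0 <= prodR (fun k => 1 - a k) N.
Proof. intros H; induction N; simpl; [lra|]. specialize (H N). nra. Qed.

Lemma weier a N : (forall k, 0 <= a k <= 1) -> prodR (fun k => 1 - a k) N >= 1 - sumR a N.
Proof.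
  intros H; induction N; simpl; [lra|].
  assert (h0 := prodR_nonneg a N H). assert (hs : 0 <= sumR a N).
  { clear IHN h0. induction N; simpl; [lra|]. specialize (H N). lra. }
  specialize (H N). nra.
Qed.

Lemma sum_geom z p M N : p <> 1 ->
  sumR (fun k => z * p ^ (M + k)) N = z * p ^ M * (1 - p ^ N) / (1 - p).
Proof.
  intros Hp. induction N; simpl.
  - field. intro; apply Hp; lra.
  - rewrite IHN, pow_add. field. intro; apply Hp; lra.
Qed.

Lemma PP_lim p z : 0 < p < 1 -> 0 <= z < 1 ->
  is_lim_seq (PP p z) (qpoch_inf z p) /\ 0 < qpoch_inf z p.
Proof.
  intros Hp Hz.
  destruct (ex_finite_lim_seq_decr (PP p z) 0) as [l Hl].
  - intros n. rewrite PP_S. assert (h := PP_pos p z n Hp Hz).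
    assert (h2 : 0 <= p ^ n) by (apply pow_ge0; lra). assert (h3 : p ^ n <= 1) by (apply pow_le1; lra). assert (0 <= z * p ^ n) by nra. nra.
  - intros n. left. apply PP_pos; auto.
  - assert (E : qpoch_inf z p = l).
    { unfold qpoch_inf. apply seq_lim_eq. apply is_lim_seq_Reals. exact Hl. }
    rewrite E. split; [exact Hl|].
    assert (Hab : Rabs p < 1) by (rewrite Rabs_pos_eq; lra).
    assert (Hpos : 0 < (1-p)/2) by lra.
    destruct (pow_lt_1_zero p Hab ((1-p)/2) Hpos) as [M HM].
    specialize (HM M (le_n M)). rewrite Rabs_pos_eq in HM by (apply pow_ge0; lra).
    assert (HPM := PP_pos p z M Hp Hz).
    assert (Hc : forall n, PP p z M / 2 <= PP p z (n + M)).
    { intros n. unfold PP. rewrite Nat.add_comm, prodR_add.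
      set (a := fun k => z * p ^ (M + k)).
      assert (Ha : forall k, 0 <= a k <= 1).
      { intros k; unfold a. assert (h : 0 <= p ^ (M+k)) by (apply pow_ge0; lra). assert (h2 : p ^ (M+k) <= 1) by (apply pow_le1; lra). nra. }
      assert (W := weier a n Ha). change (prodR (fun k => 1 - z * p ^ k) M) with (PP p z M).
      change (prodR (fun k => 1 - z * p ^ (M + k)) n) with (prodR (fun k => 1 - a k) n).
      unfold a in W at 2. rewrite sum_geom in W by lra.
      assert (h1 : 0 <= p ^ n) by (apply pow_ge0; lra). assert (h2 : p ^ n <= 1) by (apply pow_le1; lra).
      assert (h3 : 0 <= p ^ M) by (apply pow_ge0; lra).
      assert (z * p ^ M * (1 - p ^ n) <= p ^ M) by (assert (0 <= z * (1 - p ^ n) <= 1) by nra; nra).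
      assert (z * p ^ M * (1 - p ^ n) / (1 - p) <= 1/2).
      { apply Rmult_le_reg_r with (1 - p); [lra|]. field_simplify; lra. }
      nra. }
    assert (Hl' := proj1 (is_lim_seq_incr_n (PP p z) M l) Hl).
    assert (Hle := is_lim_seq_le _ _ _ _ Hc (is_lim_seq_const _) Hl').
    simpl in Hle. lra.
Qed.

Lemma PP_shift p z n : PP p z (S n) = (1 - z) * PP p (z * p) n.
Proof.
  induction n.
  - unfold PP; simpl; ring.
  - rewrite PP_S, IHn, PP_S. simpl. ring.
Qed.

Lemma qpoch_shift p z : 0 < p < 1 -> 0 <= z < 1 ->
  qpoch_inf z p = (1 - z) * qpoch_inf (z * p) p.
Proof.
  intros Hp Hz.
  destruct (PP_lim p z Hp Hz) as [H1 _].
  assert (Hz' : 0 <= z * p < 1) by nra.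
  destruct (PP_lim p (z*p) Hp Hz') as [H2 _].
  apply (is_lim_seq_incr_1 (PP p z)) in H1.
  apply (is_lim_seq_scal_l _ (1 - z)) in H2.
  apply (is_lim_seq_ext _ (fun n => PP p z (S n))) in H2.
  2:{ intros n; rewrite PP_shift; reflexivity. }
  apply is_lim_seq_unique in H1. apply is_lim_seq_unique in H2.
  rewrite H1 in H2. simpl in H2. injection H2. auto.
Qed.

Definition tt (q : R) (n : nat) : R :=
       (1 - q ^ (4 * n + 3)) * (1 - q ^ (2 * n + 1))
       * (qshift q (1/2) n) ^ 2 * qshift q (1/3) n * qshift q (2/3) n
       / ((1 - q ^ 2) * (1 - q ^ (2 * n + 2)) * (qfact q n) ^ 2
          * qshift q (7/6) (S n) * qshift q (5/6) (S n))
       * q ^ (2 * n).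

Definition FF (q : R) (n : nat) : R :=
  qshift q (1/2) (S n) * qshift q (1/2) (S (S n)) * qshift q (1/3) (S n) * qshift q (2/3) (S n)
  / (qbr q (1/2) * qbr q (1/3) * qbr q (2/3) * qfact q n * qfact q (S n)
     * qshift q (7/6) (S n) * qshift q (5/6) (S n)).

Lemma qshift_S q x n : qshift q x (S n) = qshift q x n * qbr q (x + INR n).
Proof. reflexivity. Qed.
Lemma qfact_S q n : qfact q (S n) = qfact q n * qbr q (INR (S n)).
Proof. reflexivity. Qed.
Lemma qshift_0 q x : qshift q x 0 = 1. Proof. reflexivity. Qed.
Lemma qfact_0 q : qfact q 0 = 1. Proof. reflexivity. Qed.

Lemma Rpow2n q n : 0 < q -> Rpower q (2 * INR n) = (q ^ 2) ^ n.
Proof.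
  intros Hq. rewrite <- Rpower_mult.
  assert (H2 : Rpower q (INR 2) = q ^ 2) by (apply Rpower_pow; lra).
  simpl in H2. replace (1 + 1) with 2 in H2 by ring. rewrite H2.
  apply Rpower_pow. apply pow_lt; lra.
Qed.

Lemma qbr_shift q x k : 0 < q ->
  qbr q (x + INR k) = (1 - Rpower q (2 * x) * (q ^ 2) ^ k) / (1 - q ^ 2).
Proof.
  intros Hq. unfold qbr, qpow.
  replace (2 * (x + INR k)) with (2 * x + 2 * INR k) by ring.
  rewrite Rpower_plus, Rpow2n by lra. reflexivity.
Qed.

Lemma qbr_nat q m : 0 < q -> qbr q (INR m) = (1 - (q ^ 2) ^ m) / (1 - q ^ 2).
Proof. intros Hq. unfold qbr, qpow. rewrite Rpow2n by lra. reflexivity. Qed.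

Lemma rpow_m q m : 0 < q -> Rpower q (1/3 * INR m) = (Rpower q (1/3)) ^ m.
Proof. intros Hq. rewrite <- Rpower_mult. apply Rpower_pow. unfold Rpower. apply exp_pos. Qed.

Lemma powS x m : x ^ (S m) = x * x ^ m. Proof. reflexivity. Qed.

Lemma e1 q m : q ^ (4 * m + 3) = q ^ 3 * ((q ^ 2) ^ m) ^ 2.
Proof. rewrite <- !pow_mult, <- pow_add. f_equal. lia. Qed.
Lemma e2 q m : q ^ (2 * m + 1) = q * (q ^ 2) ^ m.
Proof. rewrite <- !pow_mult. rewrite pow_add. simpl (q^1). ring_simplify. f_equal. Qed.
Lemma e3 q m : q ^ (2 * m + 2) = q ^ 2 * (q ^ 2) ^ m.
Proof. rewrite <- !pow_mult, pow_add. ring. Qed.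
Lemma e4 q m : q ^ (2 * m) = (q ^ 2) ^ m.
Proof. rewrite <- !pow_mult. reflexivity. Qed.

Section R.
Variable q : R.
Hypothesis hq : 0 < q < 1.
Let r := Rpower q (1/3).
Lemma r_pos : 0 < r. Proof. unfold r, Rpower. apply exp_pos. Qed.
Lemma r3 : r ^ 3 = q.
Proof. unfold r. rewrite <- rpow_m by lra. replace (1/3 * INR 3) with 1 by (simpl; field). apply Rpower_1; lra. Qed.
Lemma r_lt1 : r < 1.
Proof. assert (h := r_pos). assert (h3 := r3). destruct (Rlt_or_le r 1); auto. exfalso.
  assert (1 <= r^3) by (simpl; nra). lra. Qed.
Lemma c12 : Rpower q (2 * (1/2)) = q. Proof. replace (2*(1/2)) with 1 by field. apply Rpower_1; lra. Qed.
Lemma ck (x : R) m : x = 1/3 * INR m -> Rpower q x = r ^ m.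
Proof. intros ->. apply rpow_m; lra. Qed.
End R.

Lemma qbr_pos q z : 0 < q < 1 -> 0 < z -> 0 < qbr q z.
Proof.
  intros Hq Hz. unfold qbr, qpow, Rpower.
  assert (ln q < 0) by (rewrite <- ln_1; apply ln_increasing; lra).
  assert (exp (2 * z * ln q) < 1) by (rewrite <- exp_0; apply exp_increasing; nra).
  apply Rdiv_lt_0_compat; nra.
Qed.

Lemma qshift_pos q x n : 0 < q < 1 -> 0 < x -> 0 < qshift q x n.
Proof.
  intros Hq Hx. induction n; [rewrite qshift_0; lra|]. rewrite qshift_S.
  apply Rmult_lt_0_compat; auto. apply qbr_pos; auto. assert (h := pos_INR n). lra.
Qed.

Lemma qfact_pos q n : 0 < q < 1 -> 0 < qfact q n.
Proof.
  intros Hq. induction n; [rewrite qfact_0; lra|]. rewrite qfact_S.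
  apply Rmult_lt_0_compat; auto. apply qbr_pos; auto. apply lt_0_INR; lia.
Qed.

Lemma ne1 x y : 0 < x < 1 -> 0 < y <= 1 -> 1 - x * y <> 0.
Proof. intros; nra. Qed.
Lemma ne2 x : 0 < x < 1 -> 1 - x <> 0.
Proof. intros; lra. Qed.
Lemma pos1 x y : 0 < x < 1 -> 0 < y <= 1 -> 0 < x * y <= 1.
Proof. intros; split; nra. Qed.
Lemma rpk r k : 0 < r < 1 -> (0 < k)%nat -> 0 < r ^ k < 1.
Proof. intros Hr Hk. split; [apply pow_lt; lra|]. destruct (pow_lt_1_compat r k ltac:(lra) Hk). lra. Qed.
Ltac solve_ne := repeat split; try lra;
  first [ apply ne2; apply rpk; [lra|lia]
        | apply ne1; [apply rpk; [lra|lia] | apply pos1; [apply rpk; [lra|lia] | lra ] ]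
        | apply ne1; [apply rpk; [lra|lia] | lra]
        | rewrite <- pow_mult; apply ne2; apply rpk; [lra|lia]].

Lemma step q n : 0 < q < 1 -> FF q (S n) = FF q n + tt q (S n).
Proof.
  intros Hq.
  assert (Ha := qshift_pos q (1/2) n Hq ltac:(lra)).
  assert (Hb := qshift_pos q (1/3) n Hq ltac:(lra)).
  assert (Hc := qshift_pos q (2/3) n Hq ltac:(lra)).
  assert (H7 := qshift_pos q (7/6) n Hq ltac:(lra)).
  assert (H5 := qshift_pos q (5/6) n Hq ltac:(lra)).
  assert (Hf := qfact_pos q n Hq).
  unfold FF, tt. rewrite !qshift_S, !qfact_S.
  rewrite !e1, !e2, !e3, !e4.
  rewrite !qbr_shift, !qbr_nat by lra.
  rewrite !(powS (q^2)).
  try rewrite (c12 q Hq).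
  try rewrite (ck q Hq (2 * (1/3)) 2) by (simpl; field).
  try rewrite (ck q Hq (2 * (2/3)) 4) by (simpl; field).
  try rewrite (ck q Hq (2 * (7/6)) 7) by (simpl; field).
  try rewrite (ck q Hq (2 * (5/6)) 5) by (simpl; field).
  unfold qbr, qpow.
  rewrite (c12 q Hq).
  try rewrite (ck q Hq (2 * (1/3)) 2) by (simpl; field).
  try rewrite (ck q Hq (2 * (2/3)) 4) by (simpl; field).
  assert (Hr0 := r_pos q). assert (Hr1 := r_lt1 q Hq). assert (Hr3 := r3 q Hq).
  set (r := Rpower q (1/3)) in *.
  assert (Hu0 : 0 < (q^2)^n) by (apply pow_lt; nra).
  assert (Hu1 : (q^2)^n <= 1) by (apply pow_le1; nra).
  set (u := (q^2)^n) in *.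
  set (a := qshift q (1/2) n) in *.
  set (b := qshift q (1/3) n) in *.
  set (c := qshift q (2/3) n) in *.
  set (s7 := qshift q (7/6) n) in *.
  set (s5 := qshift q (5/6) n) in *.
  set (f := qfact q n) in *.
  clearbody r u a b c s7 s5 f. subst q.
  field; solve_ne.
Qed.

Lemma base q : 0 < q < 1 -> FF q 0 = tt q 0.
Proof.
  intros Hq.
  unfold FF, tt. rewrite !qshift_S, !qfact_S, !qshift_0, !qfact_0.
  rewrite !e1, !e2, !e3, !e4.
  rewrite !qbr_shift, !qbr_nat by lra.
  rewrite !(powS (q^2)), !pow_O.
  rewrite (c12 q Hq).
  try rewrite (ck q Hq (2 * (1/3)) 2) by (simpl; field).
  try rewrite (ck q Hq (2 * (2/3)) 4) by (simpl; field).
  try rewrite (ck q Hq (2 * (7/6)) 7) by (simpl; field).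
  try rewrite (ck q Hq (2 * (5/6)) 5) by (simpl; field).
  unfold qbr, qpow.
  rewrite (c12 q Hq).
  try rewrite (ck q Hq (2 * (1/3)) 2) by (simpl; field).
  try rewrite (ck q Hq (2 * (2/3)) 4) by (simpl; field).
  assert (Hr0 := r_pos q). assert (Hr1 := r_lt1 q Hq). assert (Hr3 := r3 q Hq).
  set (r := Rpower q (1/3)) in *.
  clearbody r. subst q.
  field; solve_ne.
Qed.

Lemma partial q n : 0 < q < 1 -> sum_f_R0 (tt q) n = FF q n.
Proof.
  intros Hq. induction n.
  - simpl. symmetry; apply base; auto.
  - simpl. rewrite IHn, step; auto.
Qed.

Lemma qshift_PP q x n : 0 < q < 1 ->
  qshift q x n = PP (q^2) (Rpower q (2*x)) n / (1 - q^2) ^ n.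
Proof.
  intros Hq. assert (q^2 < 1) by (simpl; nra).
  induction n.
  - rewrite qshift_0. unfold PP; simpl; field.
  - rewrite qshift_S, IHn, PP_S, qbr_shift by lra. rewrite (powS (1 - q^2)). field.
    repeat split; try lra; apply pow_nonzero; lra.
Qed.

Lemma qfact_PP q n : 0 < q < 1 ->
  qfact q n = PP (q^2) (q^2) n / (1 - q^2) ^ n.
Proof.
  intros Hq. assert (q^2 < 1) by (simpl; nra).
  induction n.
  - rewrite qfact_0. unfold PP; simpl; field.
  - rewrite qfact_S, IHn, PP_S, qbr_nat by lra. rewrite (powS (1 - q^2)), (powS (q^2)). field.
    repeat split; try lra; apply pow_nonzero; lra.
Qed.

Definition GG (q : R) (n : nat) : R :=
  let p := q ^ 2 in let r := Rpower q (1/3) in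
  (1 - p) / ((1 - q) * (1 - r^2) * (1 - r^4)) *
  (PP p q (S n) * PP p q (S (S n)) * PP p (r^2) (S n) * PP p (r^4) (S n) /
   (PP p p n * PP p p (S n) * PP p (r^7) (S n) * PP p (r^5) (S n))).

Lemma FF_GG q n : 0 < q < 1 -> FF q n = GG q n.
Proof.
  intros Hq. assert (Hp : 0 < q^2 < 1) by (simpl; split; nra).
  assert (Hr0 := r_pos q). assert (Hr1 := r_lt1 q Hq).
  unfold FF, GG. rewrite !qshift_PP, !qfact_PP by lra.
  rewrite (c12 q Hq).
  rewrite (ck q Hq (2 * (1/3)) 2) by (simpl; field).
  rewrite (ck q Hq (2 * (2/3)) 4) by (simpl; field).
  rewrite (ck q Hq (2 * (7/6)) 7) by (simpl; field).
  rewrite (ck q Hq (2 * (5/6)) 5) by (simpl; field).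
  unfold qbr, qpow.
  rewrite (c12 q Hq).
  rewrite (ck q Hq (2 * (1/3)) 2) by (simpl; field).
  rewrite (ck q Hq (2 * (2/3)) 4) by (simpl; field).
  rewrite !(powS (1 - q^2)).
  set (r := Rpower q (1/3)) in *.
  assert (R2 : 0 < r^2 < 1) by (apply rpk; [lra|lia]).
  assert (R4 : 0 < r^4 < 1) by (apply rpk; [lra|lia]).
  assert (R5 : 0 < r^5 < 1) by (apply rpk; [lra|lia]).
  assert (R7 : 0 < r^7 < 1) by (apply rpk; [lra|lia]).
  assert (H1 : 0 < PP (q^2) q (S n)) by (apply PP_pos; lra).
  assert (H2 : 0 < PP (q^2) q (S (S n))) by (apply PP_pos; lra).
  assert (H3 : 0 < PP (q^2) (r^2) (S n)) by (apply PP_pos; lra).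
  assert (H4 : 0 < PP (q^2) (r^4) (S n)) by (apply PP_pos; lra).
  assert (H5 : 0 < PP (q^2) (q^2) n) by (apply PP_pos; lra).
  assert (H6 : 0 < PP (q^2) (q^2) (S n)) by (apply PP_pos; lra).
  assert (H7 : 0 < PP (q^2) (r^7) (S n)) by (apply PP_pos; lra).
  assert (H8 : 0 < PP (q^2) (r^5) (S n)) by (apply PP_pos; lra).
  assert (W : 0 < (1 - q^2)^n) by (apply pow_lt; lra).
  field. repeat split; lra.
Qed.

Lemma lim_S p z : 0 < p < 1 -> 0 <= z < 1 -> is_lim_seq (fun n => PP p z (S n)) (qpoch_inf z p).
Proof. intros. apply (is_lim_seq_incr_1 (PP p z)). apply PP_lim; auto. Qed.
Lemma lim_SS p z : 0 < p < 1 -> 0 <= z < 1 -> is_lim_seq (fun n => PP p z (S (S n))) (qpoch_inf z p).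
Proof. intros. apply (is_lim_seq_incr_1 (fun n => PP p z (S n))). apply lim_S; auto. Qed.
Lemma lim_0 p z : 0 < p < 1 -> 0 <= z < 1 -> is_lim_seq (fun n => PP p z n) (qpoch_inf z p).
Proof. intros. apply PP_lim; auto. Qed.

Lemma GG_lim q : 0 < q < 1 ->
  let p := q ^ 2 in let r := Rpower q (1/3) in
  is_lim_seq (GG q)
   ((1 - p) / ((1 - q) * (1 - r^2) * (1 - r^4)) *
    (qpoch_inf q p * qpoch_inf q p * qpoch_inf (r^2) p * qpoch_inf (r^4) p /
     (qpoch_inf p p * qpoch_inf p p * qpoch_inf (r^7) p * qpoch_inf (r^5) p))).
Proof.
  intros Hq p r. assert (Hp : 0 < p < 1) by (unfold p; simpl; split; nra).
  assert (Hr0 := r_pos q). assert (Hr1 := r_lt1 q Hq). fold r in Hr0, Hr1.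
  assert (R2 : 0 < r^2 < 1) by (apply rpk; [lra|lia]).
  assert (R4 : 0 < r^4 < 1) by (apply rpk; [lra|lia]).
  assert (R5 : 0 < r^5 < 1) by (apply rpk; [lra|lia]).
  assert (R7 : 0 < r^7 < 1) by (apply rpk; [lra|lia]).
  unfold GG; fold p r.
  apply is_lim_seq_mult'; [apply is_lim_seq_const|].
  apply is_lim_seq_div'.
  - repeat apply is_lim_seq_mult'; first [apply lim_S; lra | apply lim_SS; lra].
  - repeat apply is_lim_seq_mult'; first [apply lim_S; lra | apply lim_0; lra].
  - destruct (PP_lim p p Hp ltac:(lra)) as [_ A1].
    destruct (PP_lim p (r^7) Hp ltac:(lra)) as [_ A2].
    destruct (PP_lim p (r^5) Hp ltac:(lra)) as [_ A3].
    assert (0 < qpoch_inf p p * qpoch_inf p p) by (apply Rmult_lt_0_compat; lra).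
    assert (0 < qpoch_inf p p * qpoch_inf p p * qpoch_inf (r^7) p) by (apply Rmult_lt_0_compat; lra).
    assert (0 < qpoch_inf p p * qpoch_inf p p * qpoch_inf (r^7) p * qpoch_inf (r^5) p) by (apply Rmult_lt_0_compat; lra).
    lra.
Qed.

Theorem mainTheorem12 (q : R) (hq0 : 0 < q) (hq1 : q < 1) :
  infinite_sum
    (fun n : nat =>
       (1 - q ^ (4 * n + 3)) * (1 - q ^ (2 * n + 1))
       * (qshift q (1/2) n) ^ 2 * qshift q (1/3) n * qshift q (2/3) n
       / ((1 - q ^ 2) * (1 - q ^ (2 * n + 2)) * (qfact q n) ^ 2
          * qshift q (7/6) (S n) * qshift q (5/6) (S n))
       * q ^ (2 * n))
    (qbr q (1/6) * (qpoch_inf (qpow q (4/3)) (q^2) * qpoch_inf (qpow q (2/3)) (q^2))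
       * qpow q (1/4)
     / (qbr q (1/3) * qbr q (2/3) * qbr q (1/2)
        * (qpoch_inf (qpow q (1/3)) (q^2) * qpoch_inf (qpow q (5/3)) (q^2))
        * pi_q q)).
Proof.
  assert (Hq : 0 < q < 1) by lra.
  change (infinite_sum (tt q) (qbr q (1/6) * (qpoch_inf (qpow q (4/3)) (q^2) * qpoch_inf (qpow q (2/3)) (q^2))
       * qpow q (1/4)
     / (qbr q (1/3) * qbr q (2/3) * qbr q (1/2)
        * (qpoch_inf (qpow q (1/3)) (q^2) * qpoch_inf (qpow q (5/3)) (q^2))
        * pi_q q))).
  assert (HL := GG_lim q Hq). cbv zeta in HL.
  apply (is_lim_seq_ext _ (sum_f_R0 (tt q))) in HL.
  2:{ intros n. rewrite partial, FF_GG; auto. }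
  apply is_lim_seq_Reals in HL.
  match type of HL with Un_cv _ ?L => replace (qbr q (1/6) * _ * _ / _) with L; [exact HL|] end.
  assert (Hp : 0 < q^2 < 1) by (simpl; split; nra).
  assert (Hr0 := r_pos q). assert (Hr1 := r_lt1 q Hq). assert (Hr3 := r3 q Hq).
  unfold pi_q, qbr, qpow.
  rewrite (c12 q Hq).
  rewrite (ck q Hq (2 * (1/3)) 2) by (simpl; field).
  rewrite (ck q Hq (2 * (2/3)) 4) by (simpl; field).
  rewrite (ck q Hq (2 * (1/6)) 1) by (simpl; field).
  rewrite (ck q Hq (4/3) 4) by (simpl; field).
  rewrite (ck q Hq (2/3) 2) by (simpl; field).
  rewrite (ck q Hq (5/3) 5) by (simpl; field).
  set (r := Rpower q (1/3)) in *.
  rewrite (qpoch_shift (q^2) r Hp ltac:(lra)).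
  replace (r * q^2) with (r^7) by (rewrite <- Hr3; ring).
  assert (R2 : 0 < r^2 < 1) by (apply rpk; [lra|lia]).
  assert (R4 : 0 < r^4 < 1) by (apply rpk; [lra|lia]).
  assert (R5 : 0 < r^5 < 1) by (apply rpk; [lra|lia]).
  assert (R7 : 0 < r^7 < 1) by (apply rpk; [lra|lia]).
  destruct (PP_lim (q^2) (q^2) Hp ltac:(lra)) as [_ A1].
  destruct (PP_lim (q^2) q Hp ltac:(lra)) as [_ A2].
  destruct (PP_lim (q^2) (r^2) Hp ltac:(lra)) as [_ A3].
  destruct (PP_lim (q^2) (r^4) Hp ltac:(lra)) as [_ A4].
  destruct (PP_lim (q^2) (r^5) Hp ltac:(lra)) as [_ A5].
  destruct (PP_lim (q^2) (r^7) Hp ltac:(lra)) as [_ A7].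
  assert (Q4 : 0 < Rpower q (1/4)) by (unfold Rpower; apply exp_pos).
  field. repeat split; lra.
Qed.
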